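(* Let $r\ge 1$ and $K\ge1$ be integers, $\beta_1,\beta_2>0$, $\theta_1,\theta_2>0$ and $\alpha>0$. Let $\zeta=(1,0,0)$, $\eta=(0,0,1)$, $v=(0,0,1)$, $v'=(0,1,0)$, and for $i=1,\dots,r$ let $k_i=2^{i-1}K\zeta\in\mathbb{Z}^3$ and $k_i'=k_i+\eta$. Define \[ u_0(x)=r^{-\beta_1}\sum_{i=1}^r|k_i|^{\theta_1}v\cos(k_i\cdot x),\qquad b_0(x)=r^{-\beta_2}\sum_{i=1}^r|k_i'|^{\theta_2}v'\cos(k_i'\cdot x). \] Then for all $t>0$, \[ \|e^{-t(-\Delta)^{\alpha}}u_0\|_{L^\infty}\lesssim r^{-\beta_1}t^{-\frac{\theta_1}{2\alpha}},\qquad \|e^{-t(-\Delta)^{\alpha}}b_0\|_{L^\infty}\lesssim r^{-\beta_2}t^{-\frac{\theta_2}{2\alpha}}, \] with implicit constants independent of $r$, $K$ and $t$.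
   Context: $e^{-t(-\Delta)^\alpha}$ denotes the fractional heat semigroup, i.e. the Fourier multiplier $e^{-t|\xi|^{2\alpha}}$; in particular $e^{-t(-\Delta)^\alpha}\big(w\cos(k\cdot x)\big)=e^{-|k|^{2\alpha}t}w\cos(k\cdot x)$. *)

(* Defs.v *)
From Stdlib Require Import Reals List.
Open Scope R_scope.

(* Vectors in R^3 (also used for wave vectors in Z^3 embedded in R^3). *)
Definition vec3 : Type := (R * R * R)%type.

Definition dot3 (a b : vec3) : R :=
  let '(a1, a2, a3) := a in let '(b1, b2, b3) := b in a1 * b1 + a2 * b2 + a3 * b3.
Definition norm3 (a : vec3) : R := sqrt (dot3 a a).
Definition scal3 (c : R) (a : vec3) : vec3 :=
  let '(a1, a2, a3) := a in (c * a1, c * a2, c * a3).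
Definition add3 (a b : vec3) : vec3 :=
  let '(a1, a2, a3) := a in let '(b1, b2, b3) := b in (a1 + b1, a2 + b2, a3 + b3).
Definition zero3 : vec3 := (0, 0, 0).

(* A finite cosine sum  x |-> sum_j w_j cos(k_j . x), stored as a list of
   pairs (w_j, k_j) (amplitude vector, wave vector). *)
Definition cos_sum : Type := list (vec3 * vec3).

Definition eval_cos_sum (L : cos_sum) (x : vec3) : vec3 :=
  fold_right (fun p acc => add3 (scal3 (cos (dot3 (snd p) x)) (fst p)) acc) zero3 L.

(* Fractional heat semigroup e^{-t(-Delta)^alpha}: Fourier multiplier
   e^{-t|xi|^{2 alpha}}, acting on  w cos(k.x)  as multiplication by
   e^{-|k|^{2 alpha} t}. *)
Definition frac_heat (alpha t : R) (L : cos_sum) : cos_sum :=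
  map (fun p => (scal3 (exp (- (Rpower (norm3 (snd p)) (2 * alpha)) * t)) (fst p), snd p)) L.

Definition zeta : vec3 := (1, 0, 0).
Definition eta  : vec3 := (0, 0, 1).
Definition vv   : vec3 := (0, 0, 1).
Definition vv'  : vec3 := (0, 1, 0).

Definition kk (K i : nat) : vec3 := scal3 (2 ^ (i - 1) * INR K) zeta.
Definition kk' (K i : nat) : vec3 := add3 (kk K i) eta.

Definition u0 (r K : nat) (beta1 theta1 : R) : cos_sum :=
  map (fun i => (scal3 (Rpower (INR r) (- beta1) * Rpower (norm3 (kk K i)) theta1) vv, kk K i))
      (seq 1 r).

Definition b0 (r K : nat) (beta2 theta2 : R) : cos_sum :=
  map (fun i => (scal3 (Rpower (INR r) (- beta2) * Rpower (norm3 (kk' K i)) theta2) vv', kk' K i))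
      (seq 1 r).

(* Main.v *)
Require Import Defs.
From Stdlib Require Import Reals List Lra Lia Psatz.
Open Scope R_scope.

Lemma step_ineq (p x y : R) : 1 < p -> 0 < x -> p * x <= y ->
  x / (1 + x)^2 + p / (p - 1) * / (1 + y) <= p / (p - 1) * / (1 + x).
Proof.
  intros Hp Hx Hy.
  assert (Hn : 0 <= p * (1 + x) * (y - x) - (p - 1) * x * (1 + y)).
  { replace (p * (1 + x) * (y - x) - (p - 1) * x * (1 + y)) with
      (x * (p-1)^2 + (y - p*x) * (p + x)) by ring.
    apply Rplus_le_le_0_compat; [apply Rmult_le_pos; nra | apply Rmult_le_pos; lra]. }
  assert (Hd : 0 < (p - 1) * (1 + x)^2 * (1 + y)).
  { apply Rmult_lt_0_compat; [apply Rmult_lt_0_compat|]; nra. }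
  assert (E : p / (p - 1) * / (1 + x) - (x / (1 + x)^2 + p / (p - 1) * / (1 + y))
     = (p * (1 + x) * (y - x) - (p - 1) * x * (1 + y)) / ((p - 1) * (1 + x)^2 * (1 + y))).
  { field; repeat split; nra. }
  assert (0 <= (p * (1 + x) * (y - x) - (p - 1) * x * (1 + y)) / ((p - 1) * (1 + x)^2 * (1 + y))).
  { unfold Rdiv; apply Rmult_le_pos; [lra | apply Rlt_le, Rinv_0_lt_compat; lra]. }
  lra.
Qed.

Lemma tele (X : nat -> R) (p : R) : 1 < p ->
  (forall i, (1 <= i)%nat -> 0 < X i) ->
  (forall i, (1 <= i)%nat -> p * X i <= X (S i)) ->
  forall n m, (1 <= m)%nat ->
  fold_right (fun i acc => X i / (1 + X i)^2 + acc) 0 (seq m n) <= p / (p - 1) * / (1 + X m).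
Proof.
  intros Hp HX HXS n. induction n as [|n IH]; intros m Hm; simpl.
  - assert (0 < 1 + X m) by (specialize (HX m Hm); lra).
    apply Rmult_le_pos; [apply Rlt_le, Rdiv_lt_0_compat; lra | apply Rlt_le, Rinv_0_lt_compat; lra].
  - specialize (IH (S m) ltac:(lia)).
    eapply Rle_trans; [apply Rplus_le_compat_l, IH|].
    apply step_ineq; auto.
Qed.
Lemma Rpower_pos x y : 0 < Rpower x y.
Proof. unfold Rpower; apply exp_pos. Qed.

Lemma exp_bound (s g : R) : 0 < s -> 0 < g ->
  exp (- s) * (1 + Rpower s g)^2 <= (1 + Rpower (2 * g) g)^2.
Proof.
  intros Hs Hg.
  set (u := s / (2 * g)).
  assert (Hu : 0 < u) by (unfold u; apply Rdiv_lt_0_compat; lra).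
  set (P := Rpower (1 + u) g).
  assert (H1 : Rpower (1 + u) (2 * g) <= exp s).
  { apply Rle_trans with (Rpower (exp u) (2 * g)).
    - apply Rle_Rpower_l; [lra|]. split; [lra|]. apply exp_ineq1_le.
    - unfold Rpower at 1. rewrite ln_exp. unfold u. right. f_equal. field. lra. }
  assert (H2 : Rpower (1 + u) (2 * g) = P ^ 2).
  { replace (2 * g) with (g + g) by ring. rewrite Rpower_plus. unfold P. ring. }
  assert (H3 : Rpower s g = Rpower (2 * g) g * Rpower u g).
  { rewrite Rpower_mult_distr by lra. f_equal. unfold u. field. lra. }
  assert (H4 : Rpower u g <= P).
  { apply Rle_Rpower_l; lra. }
  assert (H5 : 1 <= P).
  { unfold P. rewrite <- (Rpower_O (1 + u)) at 1 by lra. apply Rle_Rpower; lra. }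
  assert (HA : 0 < Rpower (2 * g) g) by apply Rpower_pos.
  assert (H6 : 0 <= 1 + Rpower s g <= (1 + Rpower (2 * g) g) * P).
  { rewrite H3. split.
    - pose proof (Rpower_pos u g). nra.
    - nra. }
  assert (H7 : (1 + Rpower s g)^2 <= ((1 + Rpower (2 * g) g) * P)^2).
  { apply pow_incr; lra. }
  assert (H8 : exp (-s) * exp s = 1) by (rewrite <- exp_plus; replace (-s + s) with 0 by ring; apply exp_0).
  pose proof (exp_pos (-s)).
  assert (H9: exp (-s) * P^2 <= 1) by nra.
  replace (((1 + Rpower (2 * g) g) * P)^2) with ((1 + Rpower (2 * g) g)^2 * P^2) in H7 by ring.
  assert (0 <= (1 + Rpower (2 * g) g)^2) by nra.
  nra.
Qed.

Lemma term_bound al th c t N : 0 < al -> 0 < th -> 0 < t -> 0 <= c -> 0 < N ->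
  exp (- Rpower N (2*al) * t) * (c * Rpower N th) <=
  c * Rpower t (-(th/(2*al))) * (1 + Rpower (2*(th/(2*al))) (th/(2*al)))^2 *
   ((Rpower N th * Rpower t (th/(2*al))) / (1 + Rpower N th * Rpower t (th/(2*al)))^2).
Proof.
  intros Ha Hth Ht Hc HN.
  set (g := th / (2 * al)).
  assert (Hg : 0 < g) by (unfold g; apply Rdiv_lt_0_compat; lra).
  set (s := Rpower N (2 * al) * t).
  assert (Hs : 0 < s) by (unfold s; pose proof (Rpower_pos N (2*al)); nra).
  set (X := Rpower N th * Rpower t g).
  assert (HX : Rpower s g = X).
  { unfold s, X. rewrite <- Rpower_mult_distr by (try apply Rpower_pos; lra).
    rewrite Rpower_mult. f_equal. f_equal. unfold g. field. lra. }
  pose proof (exp_bound s g Hs Hg) as EB. rewrite HX in EB.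
  replace (- Rpower N (2 * al) * t) with (- s) by (unfold s; ring).
  assert (HXp : 0 < X) by (unfold X; pose proof (Rpower_pos N th); pose proof (Rpower_pos t g); nra).
  assert (HN' : Rpower N th = Rpower t (- g) * X).
  { unfold X. rewrite <- Rmult_assoc, (Rmult_comm _ (Rpower N th)), Rmult_assoc, <- Rpower_plus.
    replace (-g + g) with 0 by ring. rewrite Rpower_O by lra. ring. }
  rewrite HN'.
  assert (E1 : exp (- s) <= (1 + Rpower (2 * g) g) ^ 2 / (1 + X)^2).
  { assert (0 < (1 + X)^2) by nra.
    apply (Rmult_le_reg_r ((1+X)^2)); auto. unfold Rdiv. rewrite Rmult_assoc, Rinv_l by lra. lra. }
  pose proof (Rpower_pos t (-g)). pose proof (exp_pos (-s)).
  assert (0 <= c * Rpower t (-g) * X) by (apply Rmult_le_pos; [apply Rmult_le_pos|]; lra).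
  apply Rle_trans with ((c * Rpower t (-g) * X) * ((1 + Rpower (2 * g) g) ^ 2 / (1 + X)^2)).
  - replace (exp (- s) * (c * (Rpower t (- g) * X))) with ((c * Rpower t (-g) * X) * exp (-s)) by ring.
    apply Rmult_le_compat_l; auto.
  - right. field. lra.
Qed.

Lemma eval_map (al t : R) (a : nat -> R) (k : nat -> vec3) (w : vec3) (l : list nat) x :
 eval_cos_sum (frac_heat al t (map (fun i => (scal3 (a i) w, k i)) l)) x =
 scal3 (fold_right (fun i acc => cos (dot3 (k i) x) * (exp (- Rpower (norm3 (k i)) (2*al) * t) * a i) + acc) 0 l) w.
Proof.
  destruct w as [[w1 w2] w3].
  induction l as [|i l IH]; unfold eval_cos_sum, frac_heat in *; cbn [map fold_right fst snd].
  - unfold zero3, scal3; f_equal; [f_equal|]; ring.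
  - rewrite IH. unfold scal3, add3. f_equal; [f_equal|]; ring.
Qed.

Lemma fold_abs (f g : nat -> R) (l : list nat) :
  (forall i, 0 <= g i) ->
  Rabs (fold_right (fun i acc => cos (f i) * g i + acc) 0 l) <=
  fold_right (fun i acc => g i + acc) 0 l.
Proof.
  intros Hg; induction l as [|i l IH]; simpl.
  - rewrite Rabs_R0; lra.
  - eapply Rle_trans; [apply Rabs_triang|]. apply Rplus_le_compat; auto.
    rewrite Rabs_mult, (Rabs_right (g i)) by (apply Rle_ge; auto).
    pose proof (Rabs_le_1 := COS_bound (f i)).
    assert (Rabs (cos (f i)) <= 1) by (apply Rabs_le; lra).
    specialize (Hg i). nra.
Qed.

Lemma fold_mono (f g : nat -> R) (l : list nat) :
  (forall i, f i <= g i) ->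
  fold_right (fun i acc => f i + acc) 0 l <= fold_right (fun i acc => g i + acc) 0 l.
Proof. intros H; induction l; simpl; [lra|]. specialize (H a); lra. Qed.

Lemma fold_scal (c : R) (f : nat -> R) (l : list nat) :
  fold_right (fun i acc => c * f i + acc) 0 l = c * fold_right (fun i acc => f i + acc) 0 l.
Proof. induction l; simpl; [ring|]. rewrite IHl; ring. Qed.

Definition Cst (al th : R) : R :=
  (1 + Rpower (2*(th/(2*al))) (th/(2*al)))^2 * (Rpower (sqrt 2) th / (Rpower (sqrt 2) th - 1)).

Lemma p_gt1 th : 0 < th -> 1 < Rpower (sqrt 2) th.
Proof.
  intros H. rewrite <- (Rpower_O (sqrt 2)) at 1.
  - apply Rpower_lt; [|lra]. rewrite <- sqrt_1. apply sqrt_lt_1; lra.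
  - apply sqrt_lt_R0; lra.
Qed.

Lemma Cst_pos al th : 0 < al -> 0 < th -> 0 < Cst al th.
Proof.
  intros Ha Ht. unfold Cst. pose proof (p_gt1 th Ht).
  pose proof (Rpower_pos (2*(th/(2*al))) (th/(2*al))).
  apply Rmult_lt_0_compat; [nra|]. apply Rdiv_lt_0_compat; lra.
Qed.

Lemma generic (al th c t : R) (w : vec3) (k : nat -> vec3) (r : nat) (x : vec3) :
 0 < al -> 0 < th -> 0 < t -> 0 <= c ->
 (forall a, norm3 (scal3 a w) = Rabs a) ->
 (forall i, 0 < norm3 (k i)) ->
 (forall i, (1 <= i)%nat -> sqrt 2 * norm3 (k i) <= norm3 (k (S i))) ->
 norm3 (eval_cos_sum (frac_heat al t (map (fun i => (scal3 (c * Rpower (norm3 (k i)) th) w, k i)) (seq 1 r))) x)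
 <= Cst al th * c * Rpower t (- (th / (2 * al))).
Proof.
  intros Ha Hth Ht Hc Hw Hk Hrat.
  rewrite eval_map, Hw.
  set (g := th / (2 * al)).
  set (A := (1 + Rpower (2 * g) g)^2).
  set (X := fun i => Rpower (norm3 (k i)) th * Rpower t g).
  set (p := Rpower (sqrt 2) th).
  assert (Hp : 1 < p) by (apply p_gt1; auto).
  eapply Rle_trans.
  { apply (fold_abs (fun i => dot3 (k i) x)
      (fun i => exp (- Rpower (norm3 (k i)) (2 * al) * t) * (c * Rpower (norm3 (k i)) th))).
    intro i. apply Rmult_le_pos; [apply Rlt_le, exp_pos|]. apply Rmult_le_pos; auto. apply Rlt_le, Rpower_pos. }
  eapply Rle_trans.
  { apply (fold_mono _ (fun i => (c * Rpower t (- g) * A) * (X i / (1 + X i)^2))).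
    intro i. apply term_bound; auto. }
  rewrite fold_scal.
  assert (HXp : forall i, 0 < X i).
  { intro i. unfold X. pose proof (Rpower_pos (norm3 (k i)) th). pose proof (Rpower_pos t g). nra. }
  assert (T : fold_right (fun i acc => X i / (1 + X i) ^ 2 + acc) 0 (seq 1 r) <= p / (p - 1) * / (1 + X 1%nat)).
  { apply tele; auto.
    intros i Hi. unfold X, p. rewrite <- Rmult_assoc.
    apply Rmult_le_compat_r; [apply Rlt_le, Rpower_pos|].
    rewrite Rpower_mult_distr by (auto; apply sqrt_lt_R0; lra).
    apply Rle_Rpower_l; [lra|]. split; [|auto].
    apply Rmult_lt_0_compat; auto. apply sqrt_lt_R0; lra. }
  assert (Hinv : / (1 + X 1%nat) <= 1).
  { specialize (HXp 1%nat). rewrite <- Rinv_1. apply Rinv_le_contravar; lra. }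
  assert (Hpp : 0 < p / (p - 1)) by (apply Rdiv_lt_0_compat; lra).
  assert (HcA : 0 <= c * Rpower t (- g) * A).
  { unfold A. pose proof (Rpower_pos t (-g)). apply Rmult_le_pos; [apply Rmult_le_pos; lra|]. apply pow2_ge_0. }
  apply Rle_trans with (c * Rpower t (- g) * A * (p / (p - 1))).
  - apply Rmult_le_compat_l; auto. eapply Rle_trans; [apply T|]. nra.
  - unfold Cst. fold g. fold A. fold p. right; ring.
Qed.

Lemma norm_vv a : norm3 (scal3 a vv) = Rabs a.
Proof. unfold norm3, scal3, vv, dot3. rewrite <- sqrt_Rsqr_abs. f_equal. unfold Rsqr; ring. Qed.
Lemma norm_vv' a : norm3 (scal3 a vv') = Rabs a.
Proof. unfold norm3, scal3, vv', dot3. rewrite <- sqrt_Rsqr_abs. f_equal. unfold Rsqr; ring. Qed.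

Lemma norm_kk K i : norm3 (kk K i) = sqrt ((2 ^ (i - 1) * INR K)^2).
Proof. unfold norm3, kk, scal3, zeta, dot3. f_equal. ring. Qed.
Lemma norm_kk' K i : norm3 (kk' K i) = sqrt ((2 ^ (i - 1) * INR K)^2 + 1).
Proof. unfold norm3, kk', kk, add3, scal3, zeta, eta, dot3. f_equal. ring. Qed.

Lemma a_pos K i : (1 <= K)%nat -> 1 <= 2 ^ (i - 1) * INR K.
Proof.
  intros HK. assert (1 <= INR K) by (apply (le_INR 1); auto).
  assert (1 <= 2 ^ (i - 1)) by (apply pow_R1_Rle; lra). nra.
Qed.

Lemma a_S K i : (1 <= i)%nat -> 2 ^ (S i - 1) * INR K = 2 * (2 ^ (i - 1) * INR K).
Proof.
  intros Hi. destruct i as [|i']; [lia|].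
  replace (S (S i') - 1)%nat with (S i') by lia. replace (S i' - 1)%nat with i' by lia.
  simpl; ring.
Qed.

Theorem lemma4p3 :
  forall (alpha beta1 beta2 theta1 theta2 : R),
    0 < alpha -> 0 < beta1 -> 0 < beta2 -> 0 < theta1 -> 0 < theta2 ->
    exists C : R, 0 < C /\
      forall (r K : nat), (1 <= r)%nat -> (1 <= K)%nat ->
      forall t : R, 0 < t ->
      forall x : vec3,
        norm3 (eval_cos_sum (frac_heat alpha t (u0 r K beta1 theta1)) x)
          <= C * Rpower (INR r) (- beta1) * Rpower t (- (theta1 / (2 * alpha)))
        /\
        norm3 (eval_cos_sum (frac_heat alpha t (b0 r K beta2 theta2)) x)
          <= C * Rpower (INR r) (- beta2) * Rpower t (- (theta2 / (2 * alpha))).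
Proof.
  intros al b1 b2 th1 th2 Ha Hb1 Hb2 Ht1 Ht2.
  pose proof (Cst_pos al th1 Ha Ht1). pose proof (Cst_pos al th2 Ha Ht2).
  exists (Cst al th1 + Cst al th2). split; [lra|].
  intros r K Hr HK t Ht x.
  pose proof (Rpower_pos (INR r) (-b1)). pose proof (Rpower_pos (INR r) (-b2)).
  pose proof (Rpower_pos t (- (th1 / (2 * al)))). pose proof (Rpower_pos t (- (th2 / (2 * al)))).
  split.
  - eapply Rle_trans.
    + apply (generic al th1 (Rpower (INR r) (-b1)) t vv (kk K) r x); auto; try lra.
      * apply norm_vv.
      * intro i. rewrite norm_kk. apply sqrt_lt_R0. pose proof (a_pos K i HK). nra.
      * intros i Hi. rewrite !norm_kk, a_S by auto. pose proof (a_pos K i HK).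
        rewrite <- sqrt_mult by nra. apply sqrt_le_1; nra.
    + assert (0 < Rpower (INR r) (-b1) * Rpower t (- (th1 / (2 * al)))) by nra. nra.
  - eapply Rle_trans.
    + apply (generic al th2 (Rpower (INR r) (-b2)) t vv' (kk' K) r x); auto; try lra.
      * apply norm_vv'.
      * intro i. rewrite norm_kk'. apply sqrt_lt_R0. pose proof (a_pos K i HK). nra.
      * intros i Hi. rewrite !norm_kk', a_S by auto. pose proof (a_pos K i HK).
        rewrite <- sqrt_mult by nra. apply sqrt_le_1; nra.
    + assert (0 < Rpower (INR r) (-b2) * Rpower t (- (th2 / (2 * al)))) by nra. nra.
Qed.
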